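(* Let $N$ be a positive even integer, $\alpha,\beta$ real with $(1-\alpha/2)_k\neq0$ for $k\le N/2$, and put $\eta=\tfrac12-\tfrac{\alpha+\beta}{4}$, $\tau=2N+2-\alpha-\beta$. Let $P_n$ be the monic dual $-1$ Hahn polynomials defined in the context. Then, as polynomial identities in $x$: for $0\le n\le N/2$, $$P_{2n}(x-1)=16^n(-N/2)_n(1-\alpha/2)_n\;{}_3F_2\!\left(\begin{matrix}-n,\ \eta+\tfrac x4,\ \eta-\tfrac x4\\ -\tfrac N2,\ 1-\tfrac\alpha2\end{matrix};1\right),$$ and for $0\le n\le N/2-1$, $$P_{2n+1}(x-1)=16^n(1-N/2)_n(1-\alpha/2)_n\,(x-\tau)\;{}_3F_2\!\left(\begin{matrix}-n,\ \eta+\tfrac x4,\ \eta-\tfrac x4\\ 1-\tfrac N2,\ 1-\tfrac\alpha2\end{matrix};1\right).$$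
   Context: $(c)_k=c(c+1)\cdots(c+k-1)$, $(c)_0=1$, and ${}_3F_2\!\left(\begin{matrix}-n,a_2,a_3\\ b_1,b_2\end{matrix};1\right)=\sum_{k=0}^n\frac{(-n)_k(a_2)_k(a_3)_k}{(b_1)_k(b_2)_k\,k!}$. For $N$ even and $\sigma=\alpha+\beta$: $b_n^{(-1)}=2N+1-\sigma$ for $n$ even, $b_n^{(-1)}=-2N-3+\sigma$ for $n$ odd; $u_n^{(-1)}=4n(\alpha-n)$ for $n$ even, $u_n^{(-1)}=4(N-n+1)(n+\beta-N-1)$ for $n$ odd. The monic dual $-1$ Hahn polynomials are defined by $P_{-1}=0$, $P_0=1$, $P_{n+1}(x)=(x-b_n^{(-1)})P_n(x)-u_n^{(-1)}P_{n-1}(x)$ for $n\ge0$. *)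

(* Defs.v *)
From HB Require Import structures.
From mathcomp Require Import all_boot all_order all_algebra.
Set Implicit Arguments. Unset Strict Implicit. Unset Printing Implicit Defensive.
Import Order.TTheory GRing.Theory Num.Theory.
Local Open Scope ring_scope.

Definition poch (R : ringType) (c : R) (k : nat) : R :=
  \prod_(i < k) (c + i%:R).

Definition hyp3F2 (R : fieldType) (n : nat) (a2 a3 b1 b2 : R) : R :=
  \sum_(k < n.+1)
    (poch (- n%:R) k * poch a2 k * poch a3 k)
      / (poch b1 k * poch b2 k * (k`!)%:R).

Definition bm1 (R : ringType) (N : nat) (alpha beta : R) (n : nat) : R :=
  if odd n then - 2 * N%:R - 3 + (alpha + beta)
  else 2 * N%:R + 1 - (alpha + beta).

Definition um1 (R : ringType) (N : nat) (alpha beta : R) (n : nat) : R :=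
  if odd n then 4 * (N%:R - n%:R + 1) * (n%:R + beta - N%:R - 1)
  else 4 * n%:R * (alpha - n%:R).

(* pair (P_{n-1}, P_n) with P_{-1} = 0, P_0 = 1 *)
Fixpoint dHahn_pair (R : ringType) (N : nat) (alpha beta : R) (n : nat)
  : {poly R} * {poly R} :=
  match n with
  | 0 => (0, 1)
  | n'.+1 =>
      let: (pm, p) := dHahn_pair N alpha beta n' in
      (p, ('X - (bm1 N alpha beta n')%:P) * p - (um1 N alpha beta n')%:P * pm)
  end.

Definition dHahn (R : ringType) (N : nat) (alpha beta : R) (n : nat) : {poly R} :=
  (dHahn_pair N alpha beta n).2.

(* Main.v *)
Require Import Defs.
From HB Require Import structures.
From mathcomp Require Import all_boot all_order all_algebra.
From mathcomp Require Import ring.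
Import Order.TTheory GRing.Theory Num.Theory.
Local Open Scope ring_scope.

Section Core.
Variable R : realFieldType.
Variables (M : nat) (c eta z : R).

Definition qq k : R := \prod_(0 <= i < k) ((eta + i%:R) ^+ 2 - z).
Definition pm k n : R := \prod_(k <= i < n) (i%:R - M%:R).
Definition pm1 k n : R := \prod_(k <= i < n) (i.+1%:R - M%:R).
Definition pc k n : R := \prod_(k <= i < n) (c + i%:R).
Definition ec n k : R := 16 ^+ n * (-1) ^+ k * 'C(n, k)%:R * (pm k n * pc k n).
Definition oc n k : R := 16 ^+ n * (-1) ^+ k * 'C(n, k)%:R * (pm1 k n * pc k n).
Definition Ev n := \sum_(0 <= k < n.+1) ec n k * qq k.
Definition Ov n := \sum_(0 <= k < n.+1) oc n k * qq k.

Lemma comb1 (L Rr a b f : R) : L - Rr = f * (a - b) -> a = b -> L = Rr.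
Proof. by move=> h e; apply/eqP; rewrite -subr_eq0 h e subrr mulr0. Qed.

Lemma comb2 (L Rr a1 b1 a2 b2 f1 f2 : R) :
  L - Rr = f1 * (a1 - b1) + f2 * (a2 - b2) -> a1 = b1 -> a2 = b2 -> L = Rr.
Proof. by move=> h e1 e2; apply/eqP; rewrite -subr_eq0 h e1 e2 !subrr !mulr0 addr0. Qed.

Lemma pm_recr k n : (k <= n)%N -> pm k n.+1 = pm k n * (n%:R - M%:R).
Proof. by move=> h; rewrite /pm big_nat_recr. Qed.
Lemma pm_recl k n : (k <= n)%N -> pm k n.+1 = (k%:R - M%:R) * pm1 k n.
Proof. by move=> h; rewrite /pm big_nat_recl. Qed.
Lemma pm1_recr k n : (k <= n)%N -> pm1 k n.+1 = pm1 k n * (n.+1%:R - M%:R).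
Proof. by move=> h; rewrite /pm1 big_nat_recr. Qed.
Lemma pm1_ltn k n : (k < n)%N -> pm1 k n = (k.+1%:R - M%:R) * pm1 k.+1 n.
Proof. by move=> h; rewrite /pm1 big_ltn. Qed.
Lemma pc_recr k n : (k <= n)%N -> pc k n.+1 = pc k n * (c + n%:R).
Proof. by move=> h; rewrite /pc big_nat_recr. Qed.
Lemma pc_ltn k n : (k < n)%N -> pc k n = (c + k%:R) * pc k.+1 n.
Proof. by move=> h; rewrite /pc big_ltn. Qed.

Lemma ec_small n k : (n < k)%N -> ec n k = 0.
Proof. by move=> h; rewrite /ec bin_small // mulr0 mul0r. Qed.
Lemma oc_small n k : (n < k)%N -> oc n k = 0.
Proof. by move=> h; rewrite /oc bin_small // mulr0 mul0r. Qed.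
Lemma ec_diag n : ec n n = 16 ^+ n * (-1) ^+ n.
Proof. by rewrite /ec binn /pm /pc !big_geq // !mulr1. Qed.
Lemma oc_diag n : oc n n = 16 ^+ n * (-1) ^+ n.
Proof. by rewrite /oc binn /pm1 /pc !big_geq // !mulr1. Qed.

Lemma Ov_ext n : Ov n = \sum_(0 <= k < n.+2) oc n k * qq k.
Proof. by rewrite /Ov (big_nat_recr n.+1) //= oc_small // mul0r addr0. Qed.
Lemma Ev_ext n : Ev n = \sum_(0 <= k < n.+2) ec n k * qq k.
Proof. by rewrite /Ev (big_nat_recr n.+1) //= ec_small // mul0r addr0. Qed.

Lemma R1coef n k : (k <= n.+1)%N ->
  oc n.+1 k = ec n.+1 k + 16 * n.+1%:R * (c + n%:R) * oc n k.
Proof.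
rewrite leq_eqVlt => /orP [/eqP -> | ].
  by rewrite oc_diag ec_diag oc_small // mulr0 addr0.
rewrite ltnS => hk.
rewrite /oc /ec pm1_recr // pm_recl // pc_recr //.
have hb := mul_bin_down n.+1 k.
have hb' : (n.+1%:R - k%:R) * 'C(n.+1, k)%:R = n.+1%:R * 'C(n, k)%:R :> R.
  by rewrite -natrB ?(leq_trans hk) // -!natrM -hb.
apply: (@comb1 _ _ _ _ (16 * 16 ^+ n * (-1) ^+ k * pc k n * pm1 k n * (c + n%:R)) _ hb').
rewrite exprS; ring.
Qed.

Lemma R1 n : Ov n.+1 = Ev n.+1 + 16 * n.+1%:R * (c + n%:R) * Ov n.
Proof.
rewrite [Ov n]Ov_ext /Ov /Ev mulr_sumr -big_split /=.
apply: eq_big_nat => k /andP [_ hk].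
by rewrite R1coef // mulrDl mulrA.
Qed.

Definition op n k : R := if k is k'.+1 then oc n k' else 0.
Definition EE n : R := n%:R + c - 2 * eta - M%:R.

Lemma R2coef n k : (k <= n.+1)%N ->
  ec n.+1 k = 16 * ((k%:R - M%:R) * (2 * eta + k%:R + M%:R)) * oc n k
    - 16 * op n k - 16 * (M%:R - n%:R) * EE n * ec n k.
Proof.
rewrite leq_eqVlt => /orP [/eqP -> | ].
  rewrite /= ec_diag oc_diag oc_small // ec_small // !exprS; ring.
rewrite ltnS => hk.
have h1 : pm k n * (n%:R - M%:R) = (k%:R - M%:R) * pm1 k n by rewrite -pm_recr // pm_recl.
case: k hk h1 => [|k'] hk h1.
  rewrite /= /ec /oc pm_recl // pc_recr // !bin0 !expr0.
  apply: (@comb1 _ _ _ _ (- (16 * 16 ^+ n * pc 0 n * EE n)) _ h1).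
  rewrite /EE exprS; ring.
have hk' : (k' < n)%N by [].
rewrite /op /ec /oc pm_recl // pc_recr // binS (pm1_ltn _ _ hk') (pc_ltn _ _ hk').
have h2 : k'.+1%:R * 'C(n, k'.+1)%:R = (n%:R - k'%:R) * 'C(n, k')%:R :> R.
  by rewrite -natrB ?(ltnW hk') // -!natrM mul_bin_left.
apply: (@comb2 _ _ _ _ _ _
   (16 * 16 ^+ n * (-1) ^+ k' * pc k'.+1 n * EE n * 'C(n, k'.+1)%:R)
   (16 * 16 ^+ n * (-1) ^+ k' * pc k'.+1 n * (k'.+1%:R - M%:R) * pm1 k'.+1 n) _ h1 h2).
rewrite /EE !exprS; ring.
Qed.

Lemma qq_succ k : qq k.+1 = qq k * ((eta + k%:R) ^+ 2 - z).
Proof. by rewrite /qq big_nat_recr. Qed.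

Lemma e1 n : (z - (eta + M%:R) ^+ 2) * Ov n =
  \sum_(0 <= k < n.+2) (oc n k * ((k%:R - M%:R) * (2 * eta + k%:R + M%:R)) - op n k) * qq k.
Proof.
have -> : \sum_(0 <= k < n.+2) (oc n k * ((k%:R - M%:R) * (2 * eta + k%:R + M%:R)) - op n k) * qq k
  = \sum_(0 <= k < n.+2) (oc n k * ((k%:R - M%:R) * (2 * eta + k%:R + M%:R))) * qq k
    - \sum_(0 <= k < n.+2) op n k * qq k.
  by rewrite -sumrB; apply: eq_bigr => k _; rewrite mulrBl.
rewrite (big_nat_recr n.+1) //= oc_small // mul0r mul0r addr0.
rewrite (big_nat_recl n.+1) //= mul0r add0r.
rewrite /Ov mulr_sumr -sumrB; apply: eq_big_nat => k _.
rewrite qq_succ; ring.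
Qed.

Lemma R2 n : Ev n.+1 = 16 * (z - (eta + M%:R) ^+ 2) * Ov n
   - 16 * (M%:R - n%:R) * EE n * Ev n.
Proof.
rewrite -mulrA e1 [Ev n]Ev_ext /Ev mulr_sumr mulr_sumr -sumrB.
apply: eq_big_nat => k /andP [_ hk].
rewrite R2coef //; ring.
Qed.
End Core.

Lemma dH_rec (R : ringType) N (alpha beta : R) n :
  dHahn N alpha beta n.+2 = ('X - (bm1 N alpha beta n.+1)%:P) * dHahn N alpha beta n.+1
     - (um1 N alpha beta n.+1)%:P * dHahn N alpha beta n.
Proof. by rewrite /dHahn /=; case: (dHahn_pair N alpha beta n). Qed.

Lemma dH0 (R : ringType) N (alpha beta : R) : dHahn N alpha beta 0 = 1.
Proof. by []. Qed.
Lemma dH1 (R : ringType) N (alpha beta : R) : dHahn N alpha beta 1 =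
  ('X - (bm1 N alpha beta 0)%:P) * 1 - (um1 N alpha beta 0)%:P * 0.
Proof. by []. Qed.

Lemma link (R : realFieldType) N (alpha beta x : R) : ~~ odd N -> forall n,
  (dHahn N alpha beta (2 * n)).[x - 1] =
     Ev R N./2 (1 - alpha / 2) (1 / 2 - (alpha + beta) / 4) ((x / 4) ^+ 2) n /\
  (dHahn N alpha beta (2 * n).+1).[x - 1] =
     (x - (2 * N%:R + 2 - alpha - beta)) *
     Ov R N./2 (1 - alpha / 2) (1 / 2 - (alpha + beta) / 4) ((x / 4) ^+ 2) n.
Proof.
move=> hN n.
have hNR : N%:R = 2 * (N./2)%:R :> R.
  by rewrite -[in LHS](odd_double_half N) (negbTE hN) add0n -mul2n natrM.
elim: n => [|n [IH1 IH2]].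
  rewrite muln0 dH0 dH1 /Ov /Ev !big_nat1 ec_diag oc_diag /qq big_geq // !expr0.
  rewrite /bm1 /um1 (_ : odd 0 = false) // !(hornerD, hornerN, hornerM, hornerC, hornerX); split; ring.
have E2 : (2 * n.+1 = (2 * n).+2)%N by rewrite mulnS.
have HE : (dHahn N alpha beta (2 * n.+1)).[x - 1] =
     Ev R N./2 (1 - alpha / 2) (1 / 2 - (alpha + beta) / 4) ((x / 4) ^+ 2) n.+1.
  rewrite E2 dH_rec !(hornerD, hornerN, hornerM, hornerC, hornerX) IH1 IH2.
  rewrite R2 /bm1 /um1 /EE (_ : odd (2 * n).+1 = true); last by rewrite /= oddM.
  by rewrite hNR; field.
split => //.
rewrite E2 dH_rec -E2 !(hornerD, hornerN, hornerM, hornerC, hornerX) HE IH2.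
rewrite R1 /bm1 /um1 (_ : odd (2 * n.+1) = false); last by rewrite oddM.
by rewrite hNR; field.
Qed.

Lemma poch_S (R : ringType) (b : R) k : poch b k.+1 = poch b k * (b + k%:R).
Proof. by rewrite /poch big_ord_recr. Qed.

Lemma poch_negn (R : comNzRingType) n k :
  poch (- n%:R : R) k = (-1) ^+ k * ('C(n, k) * k`!)%:R.
Proof.
elim: k => [|k IH]; first by rewrite /poch big_ord0 expr0 bin0 mul1r.
rewrite poch_S IH.
case: (leqP k n) => hk.
  have hb := mul_bin_left n k.
  rewrite factS mulnCA (mulnA k.+1) hb exprS natrM natrM natrM natrB //; ring.
rewrite !bin_small ?(ltnW hk) // ?mul0n ?mulr0 ?mul0r //.
by apply: (leq_trans hk).
Qed.

Lemma poch_split (R : ringType) (b : R) k n : (k <= n)%N ->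
  poch b n = poch b k * \prod_(k <= i < n) (b + i%:R).
Proof.
move=> h; rewrite /poch -!(big_mkord xpredT (fun i => b + i%:R)).
by rewrite (big_cat_nat (leq0n k) h).
Qed.

Lemma poch_nz (R : fieldType) (b : R) k :
  (forall i, (i < k)%N -> b + i%:R != 0) -> poch b k != 0.
Proof. by move=> h; apply/prodf_neq0 => i _; apply: h. Qed.

Lemma poch_pair (R : realFieldType) (eta x : R) k :
  poch (eta + x / 4) k * poch (eta - x / 4) k = qq R eta ((x / 4) ^+ 2) k.
Proof.
rewrite /poch /qq -big_split big_mkord.
by apply: eq_bigr => i _; rewrite -[LHS]/((eta + x / 4 + i%:R) * (eta - x / 4 + i%:R)); ring.
Qed.

Lemma convE (R : realFieldType) (M n : nat) (c eta x : R) : (n <= M)%N ->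
  (forall k, (k <= M)%N -> poch c k != 0) ->
  Ev R M c eta ((x / 4) ^+ 2) n =
  16 ^+ n * poch (- M%:R) n * poch c n *
    hyp3F2 n (eta + x / 4) (eta - x / 4) (- M%:R) c.
Proof.
move=> hn hc.
rewrite /Ev /hyp3F2 big_mkord mulr_sumr; apply: eq_bigr => [[k hk]] _ /=.
rewrite ltnS in hk.
have nzb : poch (- M%:R : R) k != 0.
  apply: poch_nz => i hi; rewrite addrC subr_eq0 eqr_nat ltn_eqF //.
  exact: (leq_trans hi (leq_trans hk hn)).
have nzc : poch c k != 0 by apply: hc; exact: (leq_trans hk hn).
have nzf : (k`!)%:R != 0 :> R by rewrite pnatr_eq0 -lt0n fact_gt0.
rewrite (@poch_split _ (- M%:R) k n hk) (@poch_split _ c k n hk) (@poch_negn _ n k) -!mulrA.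
rewrite [poch (eta + _) k * _]mulrA poch_pair.
have -> : \prod_(k <= i < n) (- M%:R + i%:R) = pm R M k n :> R.
  by apply: eq_bigr => i _; rewrite addrC.
rewrite (_ : \prod_(k <= i < n) (c + i%:R) = pc R c k n) // /ec natrM.
field.
by rewrite nzb nzc nzf.
Qed.

Lemma convO (R : realFieldType) (M n : nat) (c eta x : R) : (n.+1 <= M)%N ->
  (forall k, (k <= M)%N -> poch c k != 0) ->
  Ov R M c eta ((x / 4) ^+ 2) n =
  16 ^+ n * poch (1 - M%:R) n * poch c n *
    hyp3F2 n (eta + x / 4) (eta - x / 4) (1 - M%:R) c.
Proof.
move=> hn hc.
rewrite /Ov /hyp3F2 big_mkord mulr_sumr; apply: eq_bigr => [[k hk]] _ /=.
rewrite ltnS in hk.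
have nzb : poch (1 - M%:R : R) k != 0.
  apply: poch_nz => i hi.
  rewrite (_ : 1 - M%:R + i%:R = i.+1%:R - M%:R); last by ring.
  rewrite subr_eq0 eqr_nat ltn_eqF //.
  exact: (leq_ltn_trans (leq_trans hi hk) hn).
have nzc : poch c k != 0 by apply: hc; exact: (leq_trans hk (ltnW hn)).
have nzf : (k`!)%:R != 0 :> R by rewrite pnatr_eq0 -lt0n fact_gt0.
rewrite (@poch_split _ (1 - M%:R) k n hk) (@poch_split _ c k n hk) (@poch_negn _ n k) -!mulrA.
rewrite [poch (eta + _) k * _]mulrA poch_pair.
have -> : \prod_(k <= i < n) (1 - M%:R + i%:R) = pm1 R M k n :> R.
  by apply: eq_big_nat => i _; ring.
rewrite (_ : \prod_(k <= i < n) (c + i%:R) = pc R c k n) // /oc natrM.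
field.
by rewrite nzb nzc nzf.
Qed.

Theorem mainTheorem5 (R : realFieldType) (N : nat) (alpha beta : R) :
  (0 < N)%N -> ~~ odd N ->
  (forall k : nat, (k <= N./2)%N -> poch (1 - alpha / 2) k != 0) ->
  let eta := 1 / 2 - (alpha + beta) / 4 in
  let tau := 2 * N%:R + 2 - alpha - beta in
  (forall n : nat, (n <= N./2)%N -> forall x : R,
     (dHahn N alpha beta (2 * n)%N).[x - 1] =
       16 ^+ n * poch (- (N%:R / 2)) n * poch (1 - alpha / 2) n *
       hyp3F2 n (eta + x / 4) (eta - x / 4) (- (N%:R / 2)) (1 - alpha / 2))
  /\
  (forall n : nat, (n.+1 <= N./2)%N -> forall x : R,
     (dHahn N alpha beta (2 * n).+1).[x - 1] =
       16 ^+ n * poch (1 - N%:R / 2) n * poch (1 - alpha / 2) n * (x - tau) *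
       hyp3F2 n (eta + x / 4) (eta - x / 4) (1 - N%:R / 2) (1 - alpha / 2)).
Proof.
move=> _ hN hc eta tau.
have hNR : N%:R = 2 * (N./2)%:R :> R.
  by rewrite -[in LHS](odd_double_half N) (negbTE hN) add0n -mul2n natrM.
have hN2 : N%:R / 2 = (N./2)%:R :> R by rewrite hNR; field.
rewrite hN2; split => n hn x; have [L1 L2] := link R N alpha beta x hN n.
  by rewrite L1 convE.
by rewrite L2 convO // /tau; ring.
Qed.
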